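(* Let $\Sigma_N(z):=\left(\int_0^{z} h^N(x)^2\,\tilde h^N(x)\,dx\right)^{1/2}$ for $z\in[0,L_N]$, and let $A_N:=6\log\log N-\log\log\log N$. There exist constants $\sigma>0$ and $a>0$, depending only on $c$, such that, as $N\to\infty$, $$\frac{1}{N^{c}}\Sigma_N(L_N)^2\to\sigma^2,\qquad \frac{1}{N^{c}}\Sigma_N(A_N)^2\to\sigma^2,\qquad \frac{1}{N^{1-c}}\int_0^{A_N}N\,\tilde h^N(x)\,dx\to a .$$
   Context: Fix $c\in(0,1)$. For $\beta\in(0,1)$ put $\gamma_\beta=\sqrt{1-\beta^2}$ and $L_\beta=\gamma_\beta^{-1}\big(\pi-\arctan(\gamma_\beta/\beta)\big)$; the map $\beta\mapsto L_\beta$ is an increasing bijection from $(0,1)$ onto $(\pi/2,\infty)$. For every integer $N$ large enough that $c\log N+6\log\log N>\pi/2$, let $\beta_N\in(0,1)$ be defined by $L_{\beta_N}=c\log N+6\log\log N$, and write $L_N=L_{\beta_N}$, $\gamma_N=\gamma_{\beta_N}$, $\Omega_N=[0,L_N]$. Define, for $x\in\Omega_N$, $\tilde h^N(x)=\gamma_N^{-1}e^{\beta_N(x-L_N)}\sin(\gamma_N(L_N-x))$ and $h^N(x)=\frac{2\gamma_N}{L_N+\beta_N}e^{\beta_N(L_N-x)}\sin(\gamma_N(L_N-x))$. *)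

(* Defs.v *)
From Stdlib Require Import Reals.
From Coquelicot Require Import Coquelicot.
Open Scope R_scope.

Definition gam (b : R) : R := sqrt (1 - b ^ 2).

Definition Lb (b : R) : R := / gam b * (PI - atan (gam b / b)).

(* \tilde h^N(x) with beta = beta_N, L = L_{beta_N} *)
Definition htilde (b x : R) : R :=
  / gam b * exp (b * (x - Lb b)) * sin (gam b * (Lb b - x)).

Definition hN (b x : R) : R :=
  2 * gam b / (Lb b + b) * exp (b * (Lb b - x)) * sin (gam b * (Lb b - x)).

Definition SigmaN (b z : R) : R :=
  sqrt (RInt (fun x => (hN b x) ^ 2 * htilde b x) 0 z).

Definition A_N (N : nat) : R := 6 * ln (ln (INR N)) - ln (ln (ln (INR N))).

(* Main.v *)
Require Import Defs.
From Stdlib Require Import Reals Lra Psatz.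
From Coquelicot Require Import Coquelicot.
Open Scope R_scope.

Lemma gam_facts (b : R) : 0 < b < 1 ->
  0 < gam b < 1 /\ b ^ 2 + gam b ^ 2 = 1.
Proof.
  intros hb. unfold gam.
  assert (h0 : 0 < 1 - b ^ 2) by nra.
  assert (hs : sqrt (1 - b ^ 2) ^ 2 = 1 - b ^ 2) by (rewrite <- Rsqr_pow2; apply Rsqr_sqrt; lra).
  assert (hp : 0 < sqrt (1 - b ^ 2)) by (apply sqrt_lt_R0; lra).
  split; [split|]; try nra.
Qed.

Lemma Lb_facts (b : R) : 0 < b < 1 ->
  gam b * Lb b = PI - atan (gam b / b) /\
  0 < atan (gam b / b) < PI / 2 /\
  sin (gam b * Lb b) = gam b /\ cos (gam b * Lb b) = - b.
Proof.
  intros hb. destruct (gam_facts b hb) as [hg h1].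
  set (g := gam b) in *.
  assert (e : g * Lb b = PI - atan (g / b)).
  { unfold Lb. fold g. field. lra. }
  assert (hq : 0 < g / b) by (apply Rdiv_lt_0_compat; lra).
  assert (ha : 0 < atan (g / b)).
  { rewrite <- atan_0. apply atan_increasing. lra. }
  assert (hs : sqrt (1 + (g / b)²) = / b).
  { replace (1 + (g / b)²) with ((/ b)²).
    - apply sqrt_Rsqr. left. apply Rinv_0_lt_compat; lra.
    - unfold Rsqr. field_simplify; try lra. rewrite <- h1. field. lra. }
  repeat split; try lra.
  - pose proof (atan_bound (g/b)); lra.
  - rewrite e, sin_PI_x, sin_atan, hs. field. lra.
  - rewrite e. rewrite Rminus_def, cos_plus, cos_PI, sin_PI, cos_neg, sin_neg, cos_atan, hs.
    field. lra.
Qed.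
Definition Hf (b g L x : R) := exp (b*(x-L)) * (b * sin (g*(L-x)) + g * cos (g*(L-x))).

Lemma Hf_deriv (b g L x : R) : b^2 + g^2 = 1 ->
  is_derive (Hf b g L) x (exp (b*(x-L)) * sin (g*(L-x))).
Proof.
  intros h1. unfold Hf. auto_derive; [exact I|]. unfold Rminus.
  transitivity (exp (b*(x+-L)) * sin (g*(L+-x)) * (b^2+g^2)); [ring| rewrite h1; ring].
Qed.

Definition Gf (b g y : R) := exp (b*y) * ((3/4)*(b*sin(g*y) - g*cos(g*y))
   - (1/4)*(b*sin(3*(g*y)) - 3*g*cos(3*(g*y)))/(1+8*g^2)).

Lemma sin3 (u : R) : sin (3*u) = 3 * sin u - 4 * sin u ^ 3.
Proof.
  replace (3*u) with (2*u+u) by ring. rewrite sin_plus, sin_2a, cos_2a.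
  pose proof (sin2_cos2 u) as Hs. rewrite !Rsqr_pow2 in Hs.
  replace (2 * sin u * cos u * cos u + (cos u * cos u - sin u * sin u) * sin u) with (sin u * (3*(cos u)^2 - sin u^2)) by ring.
  replace (cos u ^2) with (1 - sin u^2) by lra. ring.
Qed.

Lemma Gf_deriv (b g y : R) : b^2 + g^2 = 1 ->
  is_derive (Gf b g) y (exp (b*y) * sin (g*y) ^ 3).
Proof.
  intros h1. assert (hd : 1 + 8*g^2 <> 0) by nra.
  unfold Gf. auto_derive; [exact I|].
  rewrite (sin3 (g*y)).
  assert (hd' : 1 + 8 * (g * (g * 1)) <> 0) by (rewrite Rmult_1_r; rewrite <- Rmult_1_r at 1; nra).
  replace (b*1) with (1*b) by ring.
  field_simplify; [|intro Hc; nra].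
  replace (b^2) with (1-g^2) by lra. field. intro Hc; nra.
Qed.

Lemma cos3 (u : R) : cos (3*u) = 4 * cos u ^ 3 - 3 * cos u.
Proof.
  replace (3*u) with (2*u+u) by ring. rewrite cos_plus, sin_2a, cos_2a.
  pose proof (sin2_cos2 u) as Hs. rewrite !Rsqr_pow2 in Hs.
  replace ((cos u * cos u - sin u * sin u) * cos u - 2 * sin u * cos u * sin u) with (cos u * (cos u^2 - 3 * sin u^2)) by ring.
  replace (sin u ^2) with (1 - cos u^2) by lra. ring.
Qed.

Lemma RInt_ht (b n A : R) : 0 < b < 1 ->
  RInt (fun x => n * htilde b x) 0 A = n / gam b * exp (b*(A - Lb b)) * sin (gam b * A).
Proof.
  intros hb. destruct (gam_facts b hb) as [hg h1].
  destruct (Lb_facts b hb) as [_ [_ [hs hc]]].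
  set (g := gam b) in *. set (L := Lb b) in *.
  assert (HI : is_RInt (fun x => n * htilde b x) 0 A
     (minus (n / g * Hf b g L A) (n / g * Hf b g L 0))).
  { apply (is_RInt_derive (fun x => n / g * Hf b g L x)).
    - intros x _.
      replace (n * htilde b x) with (n / g * (exp (b*(x-L)) * sin (g*(L-x)))).
      + apply is_derive_scal. apply Hf_deriv; exact h1.
      + unfold htilde. fold g L. field. lra.
    - intros x _. apply (@ex_derive_continuous R_AbsRing R_NormedModule). unfold htilde. auto_derive. exact I. }
  rewrite (is_RInt_unique _ _ _ _ HI).
  unfold minus, plus, opp; simpl. unfold Hf.
  replace (g * (L - A)) with (g * L - g * A) by ring.
  replace (g * (L - 0)) with (g * L) by ring.
  rewrite sin_minus, cos_minus, hs, hc.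
  transitivity (n / g * exp (b * (A - L)) * (sin (g*A) * (b^2+g^2))); [field; lra|].
  rewrite h1. ring.
Qed.

Lemma RInt_sig (b z : R) : 0 < b < 1 ->
  RInt (fun x => hN b x ^ 2 * htilde b x) 0 z =
  4 * gam b / (Lb b + b) ^ 2 * (Gf b (gam b) (Lb b) - Gf b (gam b) (Lb b - z)).
Proof.
  intros hb. destruct (gam_facts b hb) as [hg h1].
  destruct (Lb_facts b hb) as [hgL [hth [hs hc]]].
  set (g := gam b) in *. set (L := Lb b) in *.
  assert (hLpos : 0 < L).
  { assert (0 < g * L) by lra. nra. }
  set (K := 4 * g / (L + b) ^ 2).
  assert (HI : is_RInt (fun x => hN b x ^ 2 * htilde b x) 0 z
     (minus (- K * Gf b g (L - z)) (- K * Gf b g (L - 0)))).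
  { apply (is_RInt_derive (fun x => - K * Gf b g (L - x))).
    - intros x _.
      replace (hN b x ^ 2 * htilde b x) with (- K * ((-1) * (exp (b*(L-x)) * sin (g*(L-x)) ^ 3))).
      + apply is_derive_scal.
        apply (is_derive_comp (Gf b g) (fun x => L - x)).
        * apply Gf_deriv; exact h1.
        * auto_derive; [exact I| ring].
      + unfold hN, htilde. fold g L. unfold K.
        replace (exp (b * (x - L))) with (/ exp (b * (L - x))).
        * field. pose proof (exp_pos (b*(L-x))). repeat split; lra.
        * rewrite <- exp_Ropp. f_equal. ring.
    - intros x _. apply (@ex_derive_continuous R_AbsRing R_NormedModule).
      unfold hN, htilde. auto_derive. exact I. }
  rewrite (is_RInt_unique _ _ _ _ HI).
  unfold minus, plus, opp; simpl. replace (L - 0) with L by ring. fold K. ring.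
Qed.

Lemma Gf_L (b : R) : 0 < b < 1 ->
  Gf b (gam b) (Lb b) = 16 * b * gam b ^ 3 / (1 + 8 * gam b ^ 2) * exp (b * Lb b).
Proof.
  intros hb. destruct (gam_facts b hb) as [hg h1].
  destruct (Lb_facts b hb) as [hgL [hth [hs hc]]].
  set (g := gam b) in *. set (L := Lb b) in *.
  unfold Gf. rewrite sin3, cos3, hs, hc.
  assert (hd : 1 + 8 * g^2 <> 0) by (intro Hc; nra).
  replace ((-b)^3) with (- b * b^2) by ring.
  replace (b^2) with (1-g^2) by lra.
  field. exact hd.
Qed.

Lemma Gf_bound (b y : R) : 0 < b < 1 ->
  Rabs (Gf b (gam b) y) <= 3 * exp (b * y).
Proof.
  intros hb. destruct (gam_facts b hb) as [hg h1].
  set (g := gam b) in *.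
  unfold Gf. rewrite Rabs_mult, (Rabs_right (exp _)) by (left; apply exp_pos).
  rewrite Rmult_comm. apply Rmult_le_compat_r; [left; apply exp_pos|].
  assert (hd : 1 <= 1 + 8 * g^2) by nra.
  pose proof (SIN_bound (g*y)). pose proof (COS_bound (g*y)).
  pose proof (SIN_bound (3*(g*y))). pose proof (COS_bound (3*(g*y))).
  set (w := (b * sin (3 * (g * y)) - 3 * g * cos (3 * (g * y))) / (1 + 8 * g ^ 2)).
  assert (hw : Rabs w <= 4).
  { unfold w. rewrite Rabs_div by lra. rewrite (Rabs_right (1 + 8*g^2)) by lra.
    apply Rle_trans with (Rabs (b * sin (3 * (g * y)) - 3 * g * cos (3 * (g * y)))).
    - apply Rmult_le_reg_r with (1 + 8*g^2); [lra|]. unfold Rdiv. rewrite Rmult_assoc, Rinv_l by lra.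
      pose proof (Rabs_pos (b * sin (3 * (g * y)) - 3 * g * cos (3 * (g * y)))). nra.
    - apply Rabs_le. nra. }
  replace (3 / 4 * (b * sin (g * y) - g * cos (g * y)) - 1 / 4 * (b * sin (3 * (g * y)) - 3 * g * cos (3 * (g * y))) / (1 + 8 * g ^ 2))
   with (3 / 4 * (b * sin (g * y) - g * cos (g * y)) - 1 / 4 * w) by (unfold w; field; lra).
  apply Rabs_le. apply Rabs_le_between in hw. nra.
Qed.

Lemma ln_lt_id (u : R) : 0 < u -> ln u < u.
Proof.
  intros hu. rewrite <- (ln_exp u) at 2. apply ln_increasing; [exact hu|].
  pose proof (exp_ineq1_le u). lra.
Qed.

Lemma exp6ln (l : R) : 0 < l -> exp (6 * ln l) = l ^ 6.
Proof.
  intros hl. rewrite <- (exp_ln (l^6)) by (apply pow_lt; lra).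
  rewrite ln_pow by lra. f_equal. simpl. ring.
Qed.

Section PerN.
Variables (c l b : R).
Hypothesis hc : 0 < c < 1.
Hypothesis hl : 1 < l.
Hypothesis hb : 0 < b < 1.
Hypothesis hL : Lb b = c * l + 6 * ln l.

Lemma M_eq :
  / exp (c * l) * (4 * gam b / (Lb b + b) ^ 2 * Gf b (gam b) (Lb b)) =
  64 * b * (gam b * Lb b) ^ 4 * exp (- ((1 - b) * Lb b)) /
    ((Lb b / l) ^ 4 * ((Lb b + b) / l) ^ 2 * (1 + 8 * gam b ^ 2)).
Proof.
  rewrite Gf_L by exact hb.
  destruct (gam_facts b hb) as [hg h1].
  destruct (Lb_facts b hb) as [hgL [hth [hs hc']]].
  set (g := gam b) in *. set (L := Lb b) in *.
  assert (hLpos : 0 < L) by (assert (0 < g * L) by lra; nra).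
  assert (he : exp (b * L) = exp (- ((1 - b) * L)) * exp (c * l) * l ^ 6).
  { rewrite <- exp6ln by lra. rewrite <- !exp_plus. f_equal. rewrite hL. ring. }
  rewrite he. field. pose proof (exp_pos (c*l)). pose proof (exp_pos (- ((1 - b) * L))).
  repeat split; try lra; intro Hc; nra.
Qed.

Lemma E0_bound :
  Rabs (/ exp (c * l) * (4 * gam b / (Lb b + b) ^ 2 * Gf b (gam b) 0)) <=
  3 * (4 * gam b / (Lb b + b) ^ 2) * / exp (c * l).
Proof.
  destruct (gam_facts b hb) as [hg h1].
  destruct (Lb_facts b hb) as [hgL [hth [hs hc']]].
  assert (hLpos : 0 < Lb b) by (assert (0 < gam b * Lb b) by lra; nra).
  pose proof (Gf_bound b 0 hb) as hG. rewrite Rmult_0_r, exp_0 in hG.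
  assert (hK : 0 < 4 * gam b / (Lb b + b) ^ 2) by (apply Rdiv_lt_0_compat; [lra| apply pow_lt; lra]).
  pose proof (exp_pos (c*l)).
  rewrite !Rabs_mult, (Rabs_right (/ _)) by (left; apply Rinv_0_lt_compat; lra).
  rewrite (Rabs_right (4 * gam b / _)) by lra.
  assert (0 < / exp (c*l)) by (apply Rinv_0_lt_compat; lra).
  replace (3 * (4 * gam b / (Lb b + b) ^ 2) * / exp (c * l)) with (/ exp (c * l) * (4 * gam b / (Lb b + b) ^ 2 * 3)) by ring.
  apply Rmult_le_compat_l; [lra|]. apply Rmult_le_compat_l; [lra| lra].
Qed.

Definition AA := 6 * ln l - ln (ln l).

Lemma AA_pos : 0 < AA.
Proof.
  unfold AA. assert (0 < ln l) by (rewrite <- ln_1; apply ln_increasing; lra).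
  pose proof (ln_lt_id (ln l) H). lra.
Qed.

Lemma E1_bound :
  Rabs (/ exp (c * l) * (4 * gam b / (Lb b + b) ^ 2 * Gf b (gam b) (Lb b - AA))) <=
  3 * (4 * gam b / (Lb b + b) ^ 2) * ln l * exp (- ((1 - b) * (Lb b - AA))).
Proof.
  destruct (gam_facts b hb) as [hg h1].
  destruct (Lb_facts b hb) as [hgL [hth [hs hc']]].
  assert (hLpos : 0 < Lb b) by (assert (0 < gam b * Lb b) by lra; nra).
  assert (hl0 : 0 < ln l) by (rewrite <- ln_1; apply ln_increasing; lra).
  pose proof (Gf_bound b (Lb b - AA) hb) as hG.
  assert (he : exp (b * (Lb b - AA)) = exp (c * l) * (ln l * exp (- ((1 - b) * (Lb b - AA))))).
  { rewrite <- (exp_ln (ln l)) at 1 by lra. rewrite <- !exp_plus. f_equal.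
    unfold AA. rewrite hL. ring. }
  rewrite he in hG.
  assert (hK : 0 < 4 * gam b / (Lb b + b) ^ 2) by (apply Rdiv_lt_0_compat; [lra| apply pow_lt; lra]).
  pose proof (exp_pos (c*l)).
  rewrite !Rabs_mult, (Rabs_right (/ _)) by (left; apply Rinv_0_lt_compat; lra).
  rewrite (Rabs_right (4 * gam b / _)) by lra.
  assert (0 < / exp (c*l)) by (apply Rinv_0_lt_compat; lra).
  apply Rle_trans with (/ exp (c * l) * (4 * gam b / (Lb b + b) ^ 2) * (3 * (exp (c * l) * (ln l * exp (- ((1 - b) * (Lb b - AA))))))).
  - rewrite <- Rmult_assoc. apply Rmult_le_compat_l; [nra| exact hG].
  - right. field. lra.
Qed.

Lemma Q3_eq :
  / Rpower (exp l) (1 - c) * RInt (fun x => exp l * htilde b x) 0 AA =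
  exp ((1 - b) * (Lb b - AA)) * (AA / ln l) * (sin (gam b * AA) / (gam b * AA)).
Proof.
  rewrite RInt_ht by exact hb.
  destruct (gam_facts b hb) as [hg h1].
  assert (hl0 : 0 < ln l) by (rewrite <- ln_1; apply ln_increasing; lra).
  pose proof AA_pos as hA.
  unfold Rpower. rewrite ln_exp.
  assert (he : exp l * exp (b * (AA - Lb b)) = exp ((1 - c) * l) * (exp ((1 - b) * (Lb b - AA)) / ln l)).
  { rewrite <- (exp_ln (ln l)) at 1 by lra. unfold Rdiv. rewrite <- exp_Ropp, <- !exp_plus. f_equal.
    unfold AA. rewrite hL. ring. }
  transitivity (/ exp ((1 - c) * l) * (exp l * exp (b * (AA - Lb b))) * sin (gam b * AA) / gam b).
  { field. pose proof (exp_pos ((1 - c) * l)). lra. }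
  rewrite he. field. pose proof (exp_pos ((1 - c) * l)). repeat split; lra.
Qed.

End PerN.


Lemma lim_pow (u : nat -> R) (l : R) (k : nat) :
  is_lim_seq u l -> is_lim_seq (fun n => u n ^ k) (l ^ k).
Proof.
  intros H. induction k as [|k IH].
  - simpl. apply is_lim_seq_const.
  - simpl. apply (is_lim_seq_mult' _ _ _ _ H IH).
Qed.

Lemma lim_pinf_le (u v : nat -> R) (k : R) : 0 < k ->
  eventually (fun n => k * u n <= v n) ->
  is_lim_seq u p_infty -> is_lim_seq v p_infty.
Proof.
  intros hk He Hu. apply is_lim_seq_spec. apply is_lim_seq_spec in Hu.
  intros M. specialize (Hu (M / k)).
  apply (filter_imp _ _ (fun n H => H)) in He.
  generalize (filter_and _ _ He Hu). apply filter_imp.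
  intros n [h1 h2]. apply Rmult_lt_compat_l with (r := k) in h2; [|lra].
  replace (k * (M / k)) with M in h2 by (field; lra). lra.
Qed.

Lemma lim_inv0 (u : nat -> R) : is_lim_seq u p_infty -> is_lim_seq (fun n => / u n) 0.
Proof.
  intros H. apply (is_lim_seq_inv _ _ H). discriminate.
Qed.

Lemma lim_pos_ev (u : nat -> R) (l : R) : is_lim_seq u l -> 0 < l ->
  eventually (fun n => 0 < u n).
Proof.
  intros H hl. apply is_lim_seq_spec in H. specialize (H (mkposreal l hl)).
  apply (filter_imp _ _ (fun n H => H)) in H. revert H. apply filter_imp.
  intros n hn. simpl in hn. apply Rabs_lt_between in hn. lra.
Qed.

Lemma lim_gt_ev (u : nat -> R) (M : R) : is_lim_seq u p_infty ->
  eventually (fun n => M < u n).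
Proof. intros H. apply is_lim_seq_spec in H. apply H. Qed.

Lemma lim_eq (u : nat -> R) (l l' : R) : is_lim_seq u l -> l = l' -> is_lim_seq u l'.
Proof. intros H e. subst. exact H. Qed.

Lemma lim_abs0 (u w : nat -> R) : eventually (fun n => Rabs (u n) <= w n) ->
  is_lim_seq w 0 -> is_lim_seq u 0.
Proof.
  intros He Hw. apply (is_lim_seq_le_le_loc (fun n => - w n) u w).
  - revert He. apply filter_imp. intros n h. apply Rabs_le_between in h. lra.
  - apply (lim_eq _ (- 0)). apply (is_lim_seq_opp w 0); exact Hw. ring.
  - exact Hw.
Qed.


Definition HypB (c : R) (beta : nat -> R) := forall N : nat,
  c * ln (INR N) + 6 * ln (ln (INR N)) > PI / 2 ->
  0 < beta N < 1 /\ Lb (beta N) = c * ln (INR N) + 6 * ln (ln (INR N)).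

Lemma lim_l : is_lim_seq (fun N => ln (INR N)) p_infty.
Proof.
  apply (is_lim_comp_seq ln INR p_infty p_infty is_lim_ln_p).
  - apply filter_forall. intros n. discriminate.
  - exact is_lim_seq_INR.
Qed.

Lemma lim_ll : is_lim_seq (fun N => ln (ln (INR N))) p_infty.
Proof.
  apply (is_lim_comp_seq ln _ p_infty p_infty is_lim_ln_p).
  - apply filter_forall. intros n. discriminate.
  - exact lim_l.
Qed.

Lemma lim_r1 : is_lim_seq (fun N => ln (ln (INR N)) / ln (INR N)) 0.
Proof.
  apply (is_lim_comp_seq (fun y => ln y / y) _ p_infty 0 is_lim_div_ln_p).
  - apply filter_forall. intros n. discriminate.
  - exact lim_l.
Qed.

Lemma lim_r2 : is_lim_seq (fun N => ln (ln (ln (INR N))) / ln (ln (INR N))) 0.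
Proof.
  apply (is_lim_comp_seq (fun y => ln y / y) _ p_infty 0 is_lim_div_ln_p).
  - apply filter_forall. intros n. discriminate.
  - exact lim_ll.
Qed.

Lemma EV (c : R) (beta : nat -> R) : 0 < c < 1 -> HypB c beta ->
  eventually (fun N => 0 < INR N /\ 1 < ln (INR N) /\ 0 < beta N < 1 /\
     Lb (beta N) = c * ln (INR N) + 6 * ln (ln (INR N))).
Proof.
  intros hc H.
  assert (e1 := lim_gt_ev _ 0 is_lim_seq_INR).
  assert (e2 := lim_gt_ev _ (1 + PI / (2 * c)) lim_l).
  generalize (filter_and _ _ e1 e2). apply filter_imp.
  intros N [h1 h2].
  assert (hp : 0 < PI / (2 * c)) by (apply Rdiv_lt_0_compat; [apply PI_RGT_0| lra]).
  assert (hll : 0 < ln (ln (INR N))) by (rewrite <- ln_1; apply ln_increasing; lra).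
  assert (hcl : c * ln (INR N) > PI / 2).
  { apply Rmult_lt_compat_l with (r := c) in h2; [|lra].
    replace (c * (1 + PI / (2 * c))) with (c + PI / 2) in h2 by (field; lra). lra. }
  destruct (H N) as [hb hL]; [lra|].
  repeat split; try lra; exact hL.
Qed.


Section S.
Variables (c : R) (beta : nat -> R).
Hypothesis hc : 0 < c < 1.
Hypothesis HB : HypB c beta.


Lemma lim_Ll : is_lim_seq (fun N => Lb (beta N) / ln (INR N)) c.
Proof.
  apply (is_lim_seq_ext_loc (fun N => c + 6 * (ln (ln (INR N)) / ln (INR N)))).
  - generalize (EV c beta hc HB). apply filter_imp. intros N [h0 [h1 [hb hL]]]. rewrite hL. field. lra.
  - apply (lim_eq _ (c + 6 * 0)); [|ring].
    apply is_lim_seq_plus'; [apply is_lim_seq_const|].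
    apply (is_lim_seq_scal_l _ 6 0 lim_r1).
Qed.

Lemma lim_L : is_lim_seq (fun N => Lb (beta N)) p_infty.
Proof.
  apply (lim_pinf_le (fun N => ln (INR N)) _ c); [lra| |exact lim_l].
  generalize (EV c beta hc HB). apply filter_imp. intros N [h0 [h1 [hb hL]]]. rewrite hL.
  assert (0 < ln (ln (INR N))) by (rewrite <- ln_1; apply ln_increasing; lra). lra.
Qed.

Lemma ev_facts : eventually (fun N => 0 < INR N /\ 1 < ln (INR N) /\ 0 < beta N < 1 /\
     Lb (beta N) = c * ln (INR N) + 6 * ln (ln (INR N)) /\
     0 < gam (beta N) < 1 /\ beta N ^ 2 + gam (beta N) ^ 2 = 1 /\
     gam (beta N) * Lb (beta N) = PI - atan (gam (beta N) / beta N) /\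
     0 < Lb (beta N)).
Proof.
  generalize (EV c beta hc HB). apply filter_imp. intros N [h0 [h1 [hb hL]]].
  destruct (gam_facts _ hb) as [hg h2]. destruct (Lb_facts _ hb) as [hgL [hth _]].
  repeat split; try lra; try assumption.
  assert (0 < gam (beta N) * Lb (beta N)) by lra. nra.
Qed.

Lemma lim_g : is_lim_seq (fun N => gam (beta N)) 0.
Proof.
  apply (is_lim_seq_le_le_loc (fun _ => 0) _ (fun N => PI * / Lb (beta N))).
  - generalize ev_facts. apply filter_imp. intros N [_ [_ [hb [_ [hg [_ [hgL hL]]]]]]].
    split; [lra|]. destruct (Lb_facts _ hb) as [_ [hth _]].
    apply Rmult_le_reg_r with (Lb (beta N)); [lra|].
    rewrite Rmult_assoc, Rinv_l by lra. lra.
  - apply is_lim_seq_const.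
  - apply (lim_eq _ (PI * 0)); [|ring]. apply (is_lim_seq_scal_l _ PI 0). apply lim_inv0, lim_L.
Qed.

Lemma lim_b : is_lim_seq beta 1.
Proof.
  apply (is_lim_seq_ext_loc (fun N => sqrt (1 - gam (beta N) ^ 2))).
  - generalize ev_facts. apply filter_imp. intros N [_ [_ [hb [_ [hg [h2 _]]]]]].
    replace (1 - gam (beta N) ^ 2) with (beta N ^ 2) by lra. apply sqrt_pow2. lra.
  - apply (lim_eq _ (sqrt (1 - 0 ^ 2))); [| simpl; rewrite Rmult_0_l, Rminus_0_r; apply sqrt_1].
    apply is_lim_seq_continuous.
    + apply continuity_pt_sqrt. simpl; lra.
    + apply is_lim_seq_minus'; [apply is_lim_seq_const|]. apply lim_pow, lim_g.
Qed.

Lemma lim_gL : is_lim_seq (fun N => gam (beta N) * Lb (beta N)) PI.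
Proof.
  apply (is_lim_seq_ext_loc (fun N => PI - atan (gam (beta N) / beta N))).
  - generalize ev_facts. apply filter_imp. intros N [_ [_ [hb [_ [hg [h2 [hgL _]]]]]]]. lra.
  - apply (lim_eq _ (PI - atan (0 / 1))); [| unfold Rdiv; rewrite Rmult_0_l, atan_0; ring].
    apply is_lim_seq_minus'; [apply is_lim_seq_const|].
    apply is_lim_seq_continuous.
    + apply continuity_pt_filterlim. apply continuous_atan.
    + apply is_lim_seq_div'; [apply lim_g| apply lim_b| lra].
Qed.

Lemma lim_1bL : is_lim_seq (fun N => (1 - beta N) * Lb (beta N)) 0.
Proof.
  apply (is_lim_seq_ext_loc (fun N => gam (beta N) * Lb (beta N) * gam (beta N) / (1 + beta N))).
  - generalize ev_facts. apply filter_imp. intros N [_ [_ [hb [_ [hg [h2 _]]]]]].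
    field_simplify; [|lra]. replace (gam (beta N) ^ 2) with (1 - beta N ^ 2) by lra. field. lra.
  - apply (lim_eq _ (PI * 0 / (1 + 1))); [|field].
    apply is_lim_seq_div'; [| |lra].
    + apply is_lim_seq_mult'; [apply lim_gL| apply lim_g].
    + apply is_lim_seq_plus'; [apply is_lim_seq_const| apply lim_b].
Qed.

Lemma lim_Ar : is_lim_seq (fun N => A_N N / ln (ln (INR N))) 6.
Proof.
  apply (is_lim_seq_ext_loc (fun N => 6 - ln (ln (ln (INR N))) / ln (ln (INR N)))).
  - generalize ev_facts. apply filter_imp. intros N [_ [h1 _]].
    assert (0 < ln (ln (INR N))) by (rewrite <- ln_1; apply ln_increasing; lra).
    unfold A_N. field. lra.
  - apply (lim_eq _ (6 - 0)); [|ring].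
    apply is_lim_seq_minus'; [apply is_lim_seq_const| apply lim_r2].
Qed.

Lemma lim_lL : is_lim_seq (fun N => ln (INR N) / Lb (beta N)) (/ c).
Proof.
  apply (is_lim_seq_ext_loc (fun N => / (Lb (beta N) / ln (INR N)))).
  - generalize ev_facts. apply filter_imp. intros N [_ [h1 [_ [_ [_ [_ [_ hL]]]]]]].
    field. lra.
  - apply (is_lim_seq_inv _ c lim_Ll). intro e; injection e; lra.
Qed.

Lemma lim_AL : is_lim_seq (fun N => A_N N / Lb (beta N)) 0.
Proof.
  apply (is_lim_seq_ext_loc (fun N => (A_N N / ln (ln (INR N))) * (ln (ln (INR N)) / ln (INR N)) * (ln (INR N) / Lb (beta N)))).
  - generalize ev_facts. apply filter_imp. intros N [_ [h1 [_ [_ [_ [_ [_ hL]]]]]]].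
    assert (0 < ln (ln (INR N))) by (rewrite <- ln_1; apply ln_increasing; lra).
    field. repeat split; lra.
  - apply (lim_eq _ (6 * 0 * / c)); [|ring].
    apply is_lim_seq_mult'; [apply is_lim_seq_mult'; [apply lim_Ar| apply lim_r1]| apply lim_lL].
Qed.

Lemma lim_1bLA : is_lim_seq (fun N => (1 - beta N) * (Lb (beta N) - A_N N)) 0.
Proof.
  apply (is_lim_seq_ext_loc (fun N => (1 - beta N) * Lb (beta N) - ((1 - beta N) * Lb (beta N)) * (A_N N / Lb (beta N)))).
  - generalize ev_facts. apply filter_imp. intros N [_ [h1 [_ [_ [_ [_ [_ hL]]]]]]].
    field. lra.
  - apply (lim_eq _ (0 - 0 * 0)); [|ring].
    apply is_lim_seq_minus'; [apply lim_1bL| apply is_lim_seq_mult'; [apply lim_1bL| apply lim_AL]].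
Qed.

Lemma lim_gA : is_lim_seq (fun N => gam (beta N) * A_N N) 0.
Proof.
  apply (is_lim_seq_ext_loc (fun N => (gam (beta N) * Lb (beta N)) * (A_N N / Lb (beta N)))).
  - generalize ev_facts. apply filter_imp. intros N [_ [h1 [_ [_ [_ [_ [_ hL]]]]]]].
    field. lra.
  - apply (lim_eq _ (PI * 0)); [|ring].
    apply is_lim_seq_mult'; [apply lim_gL| apply lim_AL].
Qed.

End S.


Ltac feed Q := repeat match type of Q with ?A -> _ => specialize (Q ltac:(first [assumption| lra])) end.

Section S2.
Variables (c : R) (beta : nat -> R).
Hypothesis hc : 0 < c < 1.
Hypothesis HB : HypB c beta.

Let evf := ev_facts c beta hc HB.

Lemma lim_Q3 : is_lim_seq (fun N => / Rpower (INR N) (1 - c) *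
   RInt (fun x => INR N * htilde (beta N) x) 0 (A_N N)) 6.
Proof.
  apply (is_lim_seq_ext_loc (fun N => exp ((1 - beta N) * (Lb (beta N) - A_N N)) *
     (A_N N / ln (ln (INR N))) * (sin (gam (beta N) * A_N N) / (gam (beta N) * A_N N)))).
  - generalize evf. apply filter_imp. intros N [h0 [h1 [hb [hL _]]]].
    pose proof (Q3_eq c (ln (INR N)) (beta N)) as Q. feed Q.
    rewrite exp_ln in Q by lra. symmetry. exact Q.
  - apply (lim_eq _ (exp 0 * 6 * 1)); [| rewrite exp_0; ring].
    apply is_lim_seq_mult'; [apply is_lim_seq_mult'|].
    + apply is_lim_seq_continuous.
      * apply derivable_continuous_pt, derivable_pt_exp.
      * apply (lim_1bLA c beta hc HB).
    + apply (lim_Ar c beta hc HB).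
    + apply (is_lim_comp_seq (fun x => sin x / x) _ 0 1 is_lim_sinc_0).
      * generalize evf. apply filter_imp. intros N [h0 [h1 [hb [hL [hg _]]]]].
        pose proof (AA_pos (ln (INR N)) h1) as hA. unfold AA in hA.
        intro e. injection e. intro e'. unfold A_N in e'. nra.
      * apply (lim_gA c beta hc HB).
Qed.

Definition Kseq (N : nat) := 4 * gam (beta N) / (Lb (beta N) + beta N) ^ 2.

Lemma lim_Lb : is_lim_seq (fun N => Lb (beta N) + beta N) p_infty.
Proof.
  apply (lim_pinf_le (fun N => Lb (beta N)) _ 1); [lra| |apply (lim_L c beta hc HB)].
  generalize evf. apply filter_imp. intros N [_ [_ [hb _]]]. lra.
Qed.

Lemma lim_K : is_lim_seq Kseq 0.
Proof.
  apply (is_lim_seq_ext_loc (fun N => 4 * gam (beta N) * (/ (Lb (beta N) + beta N)) ^ 2)).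
  - generalize evf. apply filter_imp. intros N [_ [_ [hb [_ [_ [_ [_ hL]]]]]]].
    unfold Kseq. field. lra.
  - apply (lim_eq _ (4 * 0 * 0 ^ 2)); [|ring].
    apply is_lim_seq_mult'; [apply (is_lim_seq_scal_l _ 4 0); apply (lim_g c beta hc HB)|].
    apply lim_pow, lim_inv0, lim_Lb.
Qed.

Definition sig2 := (8 * PI ^ 2 / c ^ 3) ^ 2.

Lemma lim_M : is_lim_seq (fun N => / exp (c * ln (INR N)) * (Kseq N * Gf (beta N) (gam (beta N)) (Lb (beta N)))) sig2.
Proof.
  apply (is_lim_seq_ext_loc (fun N => 64 * beta N * (gam (beta N) * Lb (beta N)) ^ 4 * exp (- ((1 - beta N) * Lb (beta N))) /
    ((Lb (beta N) / ln (INR N)) ^ 4 * ((Lb (beta N) / ln (INR N)) + beta N * / ln (INR N)) ^ 2 * (1 + 8 * gam (beta N) ^ 2)))).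
  - generalize evf. apply filter_imp. intros N [h0 [h1 [hb [hL _]]]].
    pose proof (M_eq c (ln (INR N)) (beta N)) as Q. feed Q.
    unfold Kseq. rewrite Q. f_equal. f_equal. f_equal. field. lra.
  - apply (lim_eq _ (64 * 1 * PI ^ 4 * exp (- 0) / (c ^ 4 * (c + 1 * 0) ^ 2 * (1 + 8 * 0 ^ 2)))).
    2:{ unfold sig2. rewrite Ropp_0, exp_0. field. lra. }
    apply is_lim_seq_div'.
    + apply is_lim_seq_mult'; [apply is_lim_seq_mult'; [apply (is_lim_seq_scal_l _ 64 1)|]|].
      * apply (lim_b c beta hc HB).
      * apply lim_pow, (lim_gL c beta hc HB).
      * apply is_lim_seq_continuous; [apply derivable_continuous_pt, derivable_pt_exp|].
        apply (lim_eq _ (- 0)); [|ring]. apply (is_lim_seq_opp _ 0). apply (lim_1bL c beta hc HB).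
    + apply is_lim_seq_mult'; [apply is_lim_seq_mult'|].
      * apply lim_pow, (lim_Ll c beta hc HB).
      * apply lim_pow. apply is_lim_seq_plus'; [apply (lim_Ll c beta hc HB)|].
        apply is_lim_seq_mult'; [apply (lim_b c beta hc HB)| apply lim_inv0, lim_l].
      * apply is_lim_seq_plus'; [apply is_lim_seq_const|].
        apply (is_lim_seq_scal_l _ 8 (0^2)). apply lim_pow, (lim_g c beta hc HB).
    + assert (0 < c ^ 4 * (c + 1 * 0) ^ 2 * (1 + 8 * 0 ^ 2)).
      { replace (c ^ 4 * (c + 1 * 0) ^ 2 * (1 + 8 * 0 ^ 2)) with (c ^ 6) by ring. apply pow_lt; lra. }
      lra.
Qed.


Lemma lim_W0 : is_lim_seq (fun N => / exp (c * ln (INR N)) *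
   (Kseq N * (Gf (beta N) (gam (beta N)) (Lb (beta N)) - Gf (beta N) (gam (beta N)) 0))) sig2.
Proof.
  apply (is_lim_seq_ext_loc (fun N => / exp (c * ln (INR N)) * (Kseq N * Gf (beta N) (gam (beta N)) (Lb (beta N)))
     - / exp (c * ln (INR N)) * (Kseq N * Gf (beta N) (gam (beta N)) 0))).
  - apply filter_forall. intros N. ring.
  - apply (lim_eq _ (sig2 - 0)); [|ring].
    apply is_lim_seq_minus'; [apply lim_M|].
    apply (lim_abs0 _ (fun N => 3 * Kseq N)).
    + generalize evf. apply filter_imp. intros N [h0 [h1 [hb [hL [hg _]]]]].
      pose proof (E0_bound c (ln (INR N)) (beta N)) as Q. feed Q. unfold Kseq.
      apply Rle_trans with (1 := Q).
      assert (hK : 0 <= 4 * gam (beta N) / (Lb (beta N) + beta N) ^ 2).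
      { unfold Kseq. apply Rmult_le_pos; [lra|]. left. apply Rinv_0_lt_compat, pow_lt.
        destruct (Lb_facts _ hb) as [hgL [hth _]].
        assert (0 < gam (beta N) * Lb (beta N)) by lra.
        assert (0 < Lb (beta N)) by (apply (Rmult_lt_reg_l (gam (beta N))); lra). lra. }
      assert (he : 1 <= exp (c * ln (INR N))).
      { pose proof (exp_ineq1_le (c * ln (INR N))). assert (0 < c * ln (INR N)) by (apply Rmult_lt_0_compat; lra). lra. }
      assert (hi : / exp (c * ln (INR N)) <= 1).
      { rewrite <- Rinv_1. apply Rinv_le_contravar; lra. }
      assert (0 < / exp (c * ln (INR N))) by (apply Rinv_0_lt_compat; lra).
      replace (3 * (4 * gam (beta N) / (Lb (beta N) + beta N) ^ 2)) with (3 * (4 * gam (beta N) / (Lb (beta N) + beta N) ^ 2) * 1) at 2 by ring.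
      apply Rmult_le_compat_l; lra.
    + apply (lim_eq _ (3 * 0)); [|ring]. apply (is_lim_seq_scal_l _ 3 0). apply lim_K.
Qed.

Lemma lim_lnlL : is_lim_seq (fun N => ln (ln (INR N)) / Lb (beta N)) 0.
Proof.
  apply (is_lim_seq_ext_loc (fun N => (ln (ln (INR N)) / ln (INR N)) * (ln (INR N) / Lb (beta N)))).
  - generalize evf. apply filter_imp. intros N [h0 [h1 [hb [hL [hg [_ [_ hLp]]]]]]].
    field. lra.
  - apply (lim_eq _ (0 * / c)); [|ring]. apply is_lim_seq_mult'; [apply lim_r1| apply (lim_lL c beta hc HB)].
Qed.

Lemma lim_W1 : is_lim_seq (fun N => / exp (c * ln (INR N)) *
   (Kseq N * (Gf (beta N) (gam (beta N)) (Lb (beta N)) - Gf (beta N) (gam (beta N)) (Lb (beta N) - A_N N)))) sig2.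
Proof.
  apply (is_lim_seq_ext_loc (fun N => / exp (c * ln (INR N)) * (Kseq N * Gf (beta N) (gam (beta N)) (Lb (beta N)))
     - / exp (c * ln (INR N)) * (Kseq N * Gf (beta N) (gam (beta N)) (Lb (beta N) - A_N N)))).
  - apply filter_forall. intros N. ring.
  - apply (lim_eq _ (sig2 - 0)); [|ring].
    apply is_lim_seq_minus'; [apply lim_M|].
    apply (lim_abs0 _ (fun N => 3 * (4 * (gam (beta N) * Lb (beta N)) * (ln (ln (INR N)) / Lb (beta N)) * (/ (Lb (beta N) + beta N)) ^ 2) *
         exp (- ((1 - beta N) * (Lb (beta N) - A_N N))))).
    + generalize evf. apply filter_imp. intros N [h0 [h1 [hb [hL [hg [_ [_ hLp]]]]]]].
      pose proof (E1_bound c (ln (INR N)) (beta N)) as Q. feed Q. unfold Kseq.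
      apply Rle_trans with (1 := Q). right. unfold AA, A_N. field. lra.
    + apply (lim_eq _ (3 * (4 * PI * 0 * 0 ^ 2) * exp (- 0))); [|ring].
      apply is_lim_seq_mult'.
      * apply (is_lim_seq_scal_l _ 3 (4 * PI * 0 * 0 ^ 2)).
        apply is_lim_seq_mult'; [apply is_lim_seq_mult'; [apply (is_lim_seq_scal_l _ 4 PI)|]|].
        -- apply (lim_gL c beta hc HB).
        -- apply lim_lnlL.
        -- apply lim_pow, lim_inv0, lim_Lb.
      * apply is_lim_seq_continuous; [apply derivable_continuous_pt, derivable_pt_exp|].
        apply (is_lim_seq_opp _ 0). apply (lim_1bLA c beta hc HB).
Qed.

End S2.


Lemma sigma_part (c : R) (beta : nat -> R) (z : nat -> R) (hc : 0 < c < 1) (HB : HypB c beta) :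
  is_lim_seq (fun N => / exp (c * ln (INR N)) *
   (Kseq beta N * (Gf (beta N) (gam (beta N)) (Lb (beta N)) - Gf (beta N) (gam (beta N)) (Lb (beta N) - z N)))) (sig2 c) ->
  is_lim_seq (fun N => / Rpower (INR N) c * (SigmaN (beta N) (z N)) ^ 2) (sig2 c).
Proof.
  intros HW.
  assert (hs : 0 < sig2 c).
  { unfold sig2. apply pow_lt. apply Rdiv_lt_0_compat; [|apply pow_lt; lra].
    pose proof PI_RGT_0. apply Rmult_lt_0_compat; [lra| apply pow_lt; lra]. }
  refine (is_lim_seq_ext_loc _ _ _ _ HW).
  generalize (filter_and _ _ (lim_pos_ev _ _ HW hs) (ev_facts c beta hc HB)). apply filter_imp.
  intros N [hp [h0 [h1 [hb _]]]].
  unfold SigmaN, Rpower. rewrite RInt_sig by exact hb. fold (Kseq beta N).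
  set (V := Kseq beta N * (Gf (beta N) (gam (beta N)) (Lb (beta N)) - Gf (beta N) (gam (beta N)) (Lb (beta N) - z N))) in *.
  assert (0 < / exp (c * ln (INR N))) by (apply Rinv_0_lt_compat, exp_pos).
  assert (0 <= V).
  { destruct (Rle_lt_dec 0 V) as [h|h]; [exact h|].
    assert (/ exp (c * ln (INR N)) * V < / exp (c * ln (INR N)) * 0) by (apply Rmult_lt_compat_l; lra). lra. }
  rewrite pow2_sqrt by exact H0. reflexivity.
Qed.

Theorem proposition1p1 (c : R) (hc : 0 < c < 1) :
  exists sigma a : R, 0 < sigma /\ 0 < a /\
  forall beta : nat -> R,
    (forall N : nat, c * ln (INR N) + 6 * ln (ln (INR N)) > PI / 2 ->
       0 < beta N < 1 /\ Lb (beta N) = c * ln (INR N) + 6 * ln (ln (INR N))) ->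
    is_lim_seq (fun N => / Rpower (INR N) c * (SigmaN (beta N) (Lb (beta N))) ^ 2)
      (Finite (sigma ^ 2)) /\
    is_lim_seq (fun N => / Rpower (INR N) c * (SigmaN (beta N) (A_N N)) ^ 2)
      (Finite (sigma ^ 2)) /\
    is_lim_seq (fun N => / Rpower (INR N) (1 - c) *
                  RInt (fun x => INR N * htilde (beta N) x) 0 (A_N N))
      (Finite a).
Proof.
  exists (8 * PI ^ 2 / c ^ 3), 6.
  split; [apply Rdiv_lt_0_compat; [pose proof PI_RGT_0; apply Rmult_lt_0_compat; [lra| apply pow_lt; lra]| apply pow_lt; lra]|].
  split; [lra|].
  intros beta HB. fold (HypB c beta) in HB.
  split; [|split].
  - apply (sigma_part c beta (fun N => Lb (beta N)) hc HB).
    refine (is_lim_seq_ext_loc _ _ _ _ (lim_W0 c beta hc HB)).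
    apply filter_forall. intros N. rewrite Rminus_diag. reflexivity.
  - apply (sigma_part c beta A_N hc HB). apply (lim_W1 c beta hc HB).
  - apply (lim_Q3 c beta hc HB).
Qed.
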